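(* If $k\ge2$ is a prime power, then $q''_0(2,k,k^2)=k^2-\lfloor\frac{k-1}{2}\rfloor$; that is, the smallest $q$ for which there exists a $(k^2,k^2-k,k^2-1)_q$ code of size $k^2+k$ is $k^2-\lfloor\frac{k-1}{2}\rfloor$.
   Context: $\mathbb{Z}_q=\{0,\dots,q-1\}$ (an alphabet); $\mathrm{wt}$ = number of nonzero coordinates; $d$ = Hamming distance; $J_q(n,w)$ = weight-$w$ words of $\mathbb{Z}_q^n$. An $(n,w,d)_q$ code of size $M$ is a subset $C\subseteq J_q(n,w)$ with $|C|=M$ and pairwise distances at least $d$. For $t,k,n$ such that a Steiner system $S(t,k,n)$ exists, $q''_0(t,k,n)$ is the smallest $q$ for which an $(n,n-k,n-t+1)_q$ code of size $\binom{n}{t}/\binom{k}{t}$ exists. *)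

(* Defs.v *)
From mathcomp Require Import all_boot.
Set Implicit Arguments. Unset Strict Implicit. Unset Printing Implicit Defensive.

Definition word (n q : nat) := {ffun 'I_n -> 'I_q}.

Definition wt (n q : nat) (x : word n q) : nat :=
  #|[set i : 'I_n | nat_of_ord (x i) != 0]|.

Definition hdist (n q : nat) (x y : word n q) : nat :=
  #|[set i : 'I_n | x i != y i]|.

Definition is_code (n w d q : nat) (C : {set word n q}) : Prop :=
  (forall x, x \in C -> wt x = w) /\
  (forall x y, x \in C -> y \in C -> x != y -> d <= hdist x y).

Definition code_exists (n w d q M : nat) : Prop :=
  exists C : {set word n q}, #|C| = M /\ is_code w d C.

Definition is_q0'' (t k n q0 : nat) : Prop :=
  let P := fun q => code_exists n (n - k) (n - t + 1) q ('C(n, t) %/ 'C(k, t)) in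
  P q0 /\ (forall q, q < q0 -> ~ P q).

Definition prime_power (k : nat) : Prop :=
  exists p e, prime p /\ 0 < e /\ k = p ^ e.

(* Main.v *)
Require Import Defs.
From mathcomp Require Import all_boot all_algebra all_field zify ring.
Set Implicit Arguments. Unset Strict Implicit. Unset Printing Implicit Defensive.
Import GRing.Theory.


Lemma sum_eq1 (T : finType) (P : pred T) (a : T) :
  \sum_(s | P s) (a == s : nat) = P a.
Proof.
case: (boolP (P a)) => Pa.
  rewrite (bigD1 a) //= eqxx big1 // => s /andP[_ /negbTE].
  by rewrite eq_sym => ->.
rewrite big1 // => s Ps; case: eqP => // E; by move: Pa; rewrite E Ps.
Qed.

Lemma card_sum (T : finType) (P : pred T) : #|[set i | P i]| = \sum_i (P i : nat).
Proof. by rewrite -sum1_card big_mkcond /=; apply: eq_bigr => i _; rewrite inE; case: (P i). Qed.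

Lemma lower_ineq n w q M k (C : {set word n q.+1}) :
  #|C| = M -> is_code w n.-1 C ->
  (2*k+1) * (M * (n - w)) + 3 * (M * w) <=
  M * M.-1 + M * n + n * (k * k.+1) + 2 * n * q.
Proof.
move=> HM [Hw Hd].
pose m i s := \sum_(x in C) (x i == s : nat).
have E1 : \sum_i \sum_s (m i s)^2 = \sum_(x in C) \sum_(y in C) \sum_i (x i == y i : nat).
  transitivity (\sum_i \sum_(x in C) \sum_(y in C) (x i == y i : nat)); last first.
    rewrite exchange_big /=; apply: eq_bigr => x _; by rewrite exchange_big.
  apply: eq_bigr => i _.
  transitivity (\sum_s \sum_(x in C) \sum_(y in C) ((x i == s) * (y i == s))).
    apply: eq_bigr => s _; rewrite /m expnS expn1 big_distrl /=.
    by apply: eq_bigr => x _; rewrite big_distrr.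
  rewrite exchange_big /=; apply: eq_bigr => x _.
  rewrite exchange_big /=; apply: eq_bigr => y _.
  rewrite (bigD1 (x i)) //= eqxx mul1n big1 ?addn0; first by rewrite eq_sym.
  by move=> s /negbTE; rewrite eq_sym => ->.
have agr_le1 : forall x y, x \in C -> y \in C -> x != y ->
    \sum_i (x i == y i : nat) <= 1.
  move=> x y xC yC xy; have := Hd x y xC yC xy; rewrite /hdist card_sum.
  have : \sum_i ((x i == y i : nat) + (x i != y i)) = n.
    by rewrite (eq_bigr (fun _ => 1)) ?sum1_card ?card_ord // => i _; case: eqP.
  rewrite big_split /=; move=> Hs Hl. rewrite /= in Hl; move: Hs Hl; set a := \sum_(i < n) (x i != y i : nat); set b := \sum_(i < n) (x i == y i : nat); lia.
have E2 : \sum_(x in C) \sum_(y in C) \sum_i (x i == y i : nat) <= M * (n + M.-1).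
  rewrite -HM -sum_nat_const; apply: leq_sum => x xC.
  rewrite (bigD1 x) //= (eq_bigr (fun _ => 1)) ?sum1_card ?card_ord; last by move=> i _; rewrite eqxx.
  rewrite leq_add2l.
  apply: (@leq_trans (\sum_(y in C | y != x) 1)).
    by apply: leq_sum => y /andP[yC yx]; apply: agr_le1; rewrite // eq_sym.
  rewrite sum1_card.
  have := cardD1 x C; rewrite xC add1n => ->; rewrite /=.
  by apply: eq_leq; apply: eq_card => y; rewrite !inE andbC.
have E3 : forall i, (2*k+1) * m i ord0 + 3 * \sum_(s | s != ord0) m i s <=
                   \sum_s (m i s)^2 + k * k.+1 + 2 * q.
  move=> i; rewrite [X in _ <= X + _ + _](bigD1 ord0) //=.
  have H1 : (2*k+1) * m i ord0 <= (m i ord0)^2 + k * k.+1.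
    move: (m i ord0) => a; case: (leqP a k) => h; nia.
  have H2 : 3 * \sum_(s | s != ord0) m i s <= \sum_(s | s != ord0) (m i s)^2 + 2 * q.
    have -> : 2 * q = \sum_(s < q.+1 | s != ord0) 2.
      by rewrite sum_nat_const cardC1 card_ord /= mulnC.
    rewrite -big_split big_distrr /=; apply: leq_sum => s _; move: (m i s) => a; case: a => [|[|a]]; nia.
  move: H1 H2; set A := m i ord0; set B := \sum_(s < q.+1 | s != ord0) m i s; set D := \sum_(s < q.+1 | s != ord0) m i s ^ 2; lia.
have wtE : forall x, x \in C -> \sum_i (x i != ord0 : nat) = w.
  move=> x xC; rewrite -(Hw x xC) /wt card_sum; apply: eq_bigr => i _; by [].
have E4 : \sum_i \sum_(s | s != ord0) m i s = M * w.
  transitivity (\sum_i \sum_(x in C) (x i != ord0 : nat)).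
    apply: eq_bigr => i _; rewrite /m exchange_big /=; apply: eq_bigr => x _.
    by rewrite sum_eq1.
  rewrite exchange_big /= (eq_bigr (fun _ => w)); first by rewrite sum_nat_const HM mulnC.
  by move=> x xC; rewrite wtE.
have E5 : \sum_i m i ord0 = M * (n - w).
  rewrite /m exchange_big /= (eq_bigr (fun _ => n - w)); first by rewrite sum_nat_const HM mulnC.
  move=> x xC; rewrite -(wtE x xC).
  have : \sum_i ((x i == ord0 : nat) + (x i != ord0)) = n.
    by rewrite (eq_bigr (fun _ => 1)) ?sum1_card ?card_ord // => i _; case: eqP.
  rewrite big_split /=; set a := \sum_(i < n) (x i == ord0 : nat); set b := \sum_(i < n) (x i != ord0 : nat); lia.
have E6 : \sum_(i < n) ((2*k+1) * m i ord0 + 3 * \sum_(s | s != ord0) m i s) <=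
          \sum_(i < n) (\sum_s (m i s)^2 + k * k.+1 + 2 * q).
  by apply: leq_sum => i _; exact: E3.
rewrite !big_split /= -!big_distrr /= E4 E5 in E6.
rewrite !sum_nat_const card_ord in E6.
move: E6; rewrite E1 => E6.
move: E2 E6; set S := \sum_(x in C) _; nia.
Qed.


Section Lab.
Variables (T L : finType) (on : L -> T -> bool) (mg : T -> L -> L -> bool) (q' : nat).
Hypothesis H_geo : forall l1 l2 t t', l1 != l2 -> on l1 t -> on l2 t -> on l1 t' -> on l2 t' -> t = t'.
Hypothesis H_mg1 : forall t l1 l2, mg t l1 l2 -> [/\ ~~ on l1 t, ~~ on l2 t & forall t', ~~ (on l1 t' && on l2 t')].
Hypothesis H_mg2 : forall t l1 l2 l3, mg t l1 l2 -> mg t l1 l3 -> l2 = l3.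
Hypothesis H_mg3 : forall t l1 l2 l3, mg t l2 l1 -> mg t l1 l3 -> False.
Hypothesis H_mg4 : forall t t' l1 l2, mg t l1 l2 || mg t l2 l1 -> mg t' l1 l2 || mg t' l2 l1 -> t = t'.
Hypothesis H_cnt : forall t, #|[set l | ~~ on l t]| - #|[set l | [exists l', mg t l' l]]| <= q'.

Definition gg t l := odflt l [pick l' | mg t l' l].
Definition SS t := [set gg t l | l in [set l | ~~ on l t]].
Definition lab (l : L) (t : T) : 'I_q'.+1 :=
  if on l t then ord0 else inord (index (gg t l) (enum (SS t))).+1.

Lemma gg_eq t l1 l2 : l1 != l2 -> gg t l1 = gg t l2 -> mg t l1 l2 || mg t l2 l1.
Proof.
move=> ne; rewrite /gg; case: pickP => [a Ha|Hn1]; case: pickP => [b Hb|Hn2] /=.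
- move=> ab; subst b; by rewrite (H_mg2 Ha Hb) eqxx in ne.
- by move=> E; subst a; rewrite Ha orbT.
- by move=> E; subst b; rewrite Hb.
- by move=> E; rewrite E eqxx in ne.
Qed.

Lemma SS_sub t : SS t \subset [set l | ~~ on l t] :\: [set l | [exists l', mg t l' l]].
Proof.
apply/subsetP => x /imsetP [l]; rewrite inE => Hl ->; rewrite /gg.
case: pickP => [a Ha|Hn] /=.
  have [Ha1 _ _] := H_mg1 Ha; rewrite !inE Ha1 andbT.
  apply/existsP => [[a' Ha']]; exact: (H_mg3 Ha' Ha).
rewrite !inE Hl andbT; apply/existsP => [[a' Ha']]; by have := Hn a'; rewrite Ha'.
Qed.

Lemma SS_card t : #|SS t| <= q'.
Proof.
apply: leq_trans (subset_leq_card (SS_sub t)) _.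
rewrite cardsDS; first exact: H_cnt.
apply/subsetP => x; rewrite !inE => /existsP [a Ha]; by have [_ -> _] := H_mg1 Ha.
Qed.

Lemma lab_val l t : ~~ on l t -> nat_of_ord (lab l t) = (index (gg t l) (enum (SS t))).+1.
Proof.
move=> Hl; rewrite /lab (negbTE Hl) inordK // ltnS.
apply: leq_trans (SS_card t); rewrite cardE index_mem mem_enum.
by apply: imset_f; rewrite inE.
Qed.

Lemma lab0 l t : (nat_of_ord (lab l t) != 0) = ~~ on l t.
Proof. case: (boolP (on l t)) => H; first by rewrite /lab H. by rewrite lab_val. Qed.

Lemma lab_agree l1 l2 : l1 != l2 -> #|[set t | lab l1 t == lab l2 t]| <= 1.
Proof.
move=> ne.
have key : forall t, lab l1 t == lab l2 t ->
   (on l1 t && on l2 t) || (~~ on l1 t && ~~ on l2 t && (mg t l1 l2 || mg t l2 l1)).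
  move=> t /eqP E.
  case: (boolP (on l1 t)) => H1; case: (boolP (on l2 t)) => H2 //=.
  - by move/(congr1 (@nat_of_ord _)): E; rewrite (lab_val H2) /lab H1.
  - by move/(congr1 (@nat_of_ord _)): E; rewrite (lab_val H1) /lab H2.
  - move/(congr1 (@nat_of_ord _)): E; rewrite (lab_val H1) (lab_val H2) => -[] E.
    apply: gg_eq => //.
    have m1 : gg t l1 \in enum (SS t) by rewrite mem_enum; apply: imset_f; rewrite inE.
    have m2 : gg t l2 \in enum (SS t) by rewrite mem_enum; apply: imset_f; rewrite inE.
    by rewrite -(nth_index (gg t l1) m1) E nth_index.
apply/card_le1_eqP => t t'; rewrite !inE => /key H /key H'.
case/orP: H => [/andP[a b]|/andP[/andP[a b] c]]; case/orP: H' => [/andP[a' b']|/andP[/andP[a' b'] c']].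
- exact: H_geo ne a' b' a b.
- case/orP: c' => /H_mg1 [_ _ /(_ t)]; by rewrite ?a ?b.
- case/orP: c => /H_mg1 [_ _ /(_ t')]; by rewrite ?a' ?b'.
- exact: H_mg4 c' c.
Qed.

End Lab.


Lemma card_transport (T : finType) (t0 : T) n (Hn : #|T| = n) (P : pred T) :
  #|[set i : 'I_n | P (nth t0 (enum T) i)]| = #|[set t | P t]|.
Proof.
pose pt (i : 'I_n) := nth t0 (enum T) i.
have inj : injective pt.
  move=> i j /eqP; rewrite /pt nth_uniq ?enum_uniq ?size_enum_ord -?cardE ?Hn //.
  by move/eqP/val_inj.
rewrite -(card_imset _ inj); apply: eq_card => t; rewrite !inE.
apply/imsetP/idP => [[i]|Pt]; first by rewrite inE => Pi ->.
have Hi : index t (enum T) < n by rewrite -Hn cardE index_mem mem_enum.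
exists (Ordinal Hi); last by rewrite /pt /= nth_index ?mem_enum.
by rewrite inE /pt /= nth_index ?mem_enum.
Qed.

Lemma code_of_labels (T I : finType) (t0 : T) n q M w (lab : I -> T -> 'I_q) :
  #|T| = n -> 1 < n -> #|I| = M ->
  (forall a, #|[set t | nat_of_ord (lab a t) != 0]| = w) ->
  (forall a b, a != b -> #|[set t | lab a t == lab b t]| <= 1) ->
  code_exists n w n.-1 q M.
Proof.
move=> Hn n1 HM Hw Hag.
pose wd a : word n q := [ffun i : 'I_n => lab a (nth t0 (enum T) i)].
have Hdist : forall a b, a != b -> n.-1 <= hdist (wd a) (wd b).
  move=> a b ab; rewrite /hdist.
  rewrite (eq_card (B := [set i : 'I_n | (fun t => lab a t != lab b t) (nth t0 (enum T) i)])); last first.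
    by move=> i; rewrite !inE !ffunE.
  rewrite (card_transport t0 Hn (fun t => lab a t != lab b t)).
  have := Hag a b ab; have := cardsC [set t | lab a t == lab b t].
  rewrite Hn.
  have -> : ~: [set t | lab a t == lab b t] = [set t | lab a t != lab b t].
    by apply/setP => t; rewrite !inE.
  lia.
have inj : injective wd.
  move=> a b E; apply/eqP/negPn/negP => ab; have := Hdist a b ab.
  rewrite E /hdist (eq_card (B := pred0)) ?card0; first lia.
  by move=> i; rewrite !inE eqxx.
exists [set wd a | a in [set: I]]; split.
  by rewrite card_imset // cardsT.
split.
  move=> x /imsetP [a _ ->]; rewrite /wt -(Hw a).
  rewrite (eq_card (B := [set i : 'I_n | (fun t => nat_of_ord (lab a t) != 0) (nth t0 (enum T) i)])); last first.
    by move=> i; rewrite !inE !ffunE.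
  by rewrite (card_transport t0 Hn (fun t => nat_of_ord (lab a t) != 0)).
move=> x y /imsetP [a _ ->] /imsetP [b _ ->] xy; apply: Hdist.
by apply: contraNneq xy => ->.
Qed.



Lemma modP2 x m : 0 < m -> x < 2 * m ->
  (x < m /\ x %% m = x) \/ (m <= x /\ x %% m = x - m).
Proof.
move=> m0 x2; case: (ltnP x m) => h; first by left; rewrite modn_small.
right; split => //; rewrite -{1}(subnK h) modnDr modn_small //; lia.
Qed.

Ltac kill_mod := repeat match goal with
 | |- context [?x %% ?m] =>
     let H := fresh "H" in
     have H := @modP2 x m ltac:(lia) ltac:(lia);
     move: H; generalize (x %% m); intros ? ?
 end.

Definition prO h c i := ((c + i) %% h.*2.+1, (c + h.*2.+1 - i) %% h.*2.+1).
Definition prE h c i := if c < h.*2.+1 then (if i == h then (h.*2.+1, (c + h) %% h.*2.+1) else prO h c i)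
                        else (2 * i - 2, 2 * i - 1).

Lemma prO_F1 h c i : c < h.*2.+1 -> 0 < i <= h ->
  [&& (prO h c i).1 < h.*2.+1, (prO h c i).2 < h.*2.+1, (prO h c i).1 != c,
      (prO h c i).2 != c & (prO h c i).1 != (prO h c i).2].
Proof. rewrite /prO /= => H1 H2. kill_mod. lia. Qed.

Lemma prO_F2 h c i i' : c < h.*2.+1 -> 0 < i <= h -> 0 < i' <= h ->
  [|| (prO h c i).1 == (prO h c i').1, (prO h c i).1 == (prO h c i').2,
      (prO h c i).2 == (prO h c i').1 | (prO h c i).2 == (prO h c i').2] -> i = i'.
Proof. rewrite /prO /= => H1 H2 H3. kill_mod. lia. Qed.

Lemma prO_F3 h c c' i i' : c < h.*2.+1 -> c' < h.*2.+1 -> 0 < i <= h -> 0 < i' <= h ->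
  ((prO h c i).1 == (prO h c' i').1) && ((prO h c i).2 == (prO h c' i').2) ||
  ((prO h c i).1 == (prO h c' i').2) && ((prO h c i).2 == (prO h c' i').1) -> c = c'.
Proof. rewrite /prO /= => H1 H2 H3 H4. kill_mod. lia. Qed.

Lemma prE_F1 h c i : c < h.*2.+2 -> 0 < i <= h ->
  [&& (prE h c i).1 < h.*2.+2, (prE h c i).2 < h.*2.+2, (prE h c i).1 != c,
      (prE h c i).2 != c & (prE h c i).1 != (prE h c i).2].
Proof. rewrite /prE /prO => H1 H2; repeat (case: ifP => ?); rewrite /=; kill_mod; lia. Qed.

Lemma prE_F2 h c i i' : c < h.*2.+2 -> 0 < i <= h -> 0 < i' <= h ->
  [|| (prE h c i).1 == (prE h c i').1, (prE h c i).1 == (prE h c i').2,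
      (prE h c i).2 == (prE h c i').1 | (prE h c i).2 == (prE h c i').2] -> i = i'.
Proof. rewrite /prE /prO => H1 H2 H3; repeat (case: ifP => ?); rewrite /=; kill_mod; lia. Qed.

Lemma prE_F3 h c c' i i' : c < h.*2.+2 -> c' < h.*2.+2 -> 0 < i <= h -> 0 < i' <= h ->
  ((prE h c i).1 == (prE h c' i').1) && ((prE h c i).2 == (prE h c' i').2) ||
  ((prE h c i).1 == (prE h c' i').2) && ((prE h c i).2 == (prE h c' i').1) -> c = c'.
Proof. rewrite /prE /prO => H1 H2 H3 H4; repeat (case: ifP => ?); rewrite /=; kill_mod; lia. Qed.

Section Geo.
Variables (F : finFieldType) (k : nat).
Hypothesis HF : #|F| = k.

Definition onl (l : option F * F) (t : F * F) : bool :=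
  match l with (Some m, c) => t.2 == (m * t.1 + c)%R | (None, c) => t.1 == c end.

Lemma geo l1 l2 t t' : l1 != l2 -> onl l1 t -> onl l2 t -> onl l1 t' -> onl l2 t' -> t = t'.
Proof.
case: t => x y; case: t' => x' y'.
case: l1 => [[m|] c]; case: l2 => [[m'|] c'] ne /=.
- move=> /eqP E1 /eqP E2 /eqP E3 /eqP E4.
  have [mm|mm] := eqVneq m m'.
    subst m'; have : c = c'.
      by apply: (addrI (m * x)%R); rewrite -E1 E2.
    by move=> ?; subst c'; rewrite eqxx in ne.
  have nz : (m - m')%R != 0%R by rewrite subr_eq0.
  have Hx : ((m - m') * x = c' - c)%R.
    have Ec' : c' = (m * x + c - m' * x)%R by rewrite -E1 E2; ring.
    rewrite Ec'; ring.
  have Hx' : ((m - m') * x' = c' - c)%R.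
    have Ec' : c' = (m * x' + c - m' * x')%R by rewrite -E3 E4; ring.
    rewrite Ec'; ring.
  have exx : x = x' by apply: (mulfI nz); rewrite Hx Hx'.
  by subst x'; rewrite E1 E3.
- move=> /eqP E1 /eqP E2 /eqP E3 /eqP E4; subst x x'; by rewrite E1 E3.
- move=> /eqP E1 /eqP E2 /eqP E3 /eqP E4; subst x x'; by rewrite E2 E4.
- move=> /eqP E1 /eqP E2; subst c c'; by rewrite eqxx in ne.
Qed.

Variable h : nat.
Hypothesis Hk : k = h.*2.+1 \/ k = h.*2.+2.

Definition pr c i := if odd k then prO h c i else prE h c i.

Lemma pr_F1 c i : c < k -> 0 < i <= h ->
  [&& (pr c i).1 < k, (pr c i).2 < k, (pr c i).1 != c,
      (pr c i).2 != c & (pr c i).1 != (pr c i).2].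
Proof.
rewrite /pr; case: Hk => ->; rewrite /= odd_double /=; [exact: prO_F1 | exact: prE_F1].
Qed.

Lemma pr_F2 c i i' : c < k -> 0 < i <= h -> 0 < i' <= h ->
  [|| (pr c i).1 == (pr c i').1, (pr c i).1 == (pr c i').2,
      (pr c i).2 == (pr c i').1 | (pr c i).2 == (pr c i').2] -> i = i'.
Proof.
rewrite /pr; case: Hk => ->; rewrite /= odd_double /=; [exact: prO_F2 | exact: prE_F2].
Qed.

Lemma pr_F3 c c' i i' : c < k -> c' < k -> 0 < i <= h -> 0 < i' <= h ->
  ((pr c i).1 == (pr c' i').1) && ((pr c i).2 == (pr c' i').2) ||
  ((pr c i).1 == (pr c' i').2) && ((pr c i).2 == (pr c' i').1) -> c = c'.
Proof.
rewrite /pr; case: Hk => ->; rewrite /= odd_double /=; [exact: prO_F3 | exact: prE_F3].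
Qed.

Definition eF n : F := nth 0%R (enum F) n.
Definition rF (x : F) := index x (enum F).

Lemma rF_lt x : rF x < k.
Proof. by rewrite -HF cardE index_mem mem_enum. Qed.
Lemma rFK x : eF (rF x) = x.
Proof. by rewrite /eF /rF nth_index ?mem_enum. Qed.
Lemma eF_inj a b : a < k -> b < k -> eF a = eF b -> a = b.
Proof.
move=> ha hb /eqP; rewrite /eF nth_uniq ?enum_uniq -?cardE ?HF //; by move/eqP.
Qed.

Definition cidx (t : F * F) := rF (t.2 - t.1 * t.1)%R.

Definition mg (t : F * F) (l1 l2 : option F * F) :=
  has (fun i => (l1 == (Some t.1, eF (pr (cidx t) i).1)) && (l2 == (Some t.1, eF (pr (cidx t) i).2))) (iota 1 h).

Lemma mgP t l1 l2 : mg t l1 l2 -> exists i, [/\ 0 < i <= h,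
  l1 = (Some t.1, eF (pr (cidx t) i).1) & l2 = (Some t.1, eF (pr (cidx t) i).2)].
Proof.
move/hasP => [i]; rewrite mem_iota => Hi /andP[/eqP -> /eqP ->].
exists i; split => //; lia.
Qed.

Lemma mg1 t l1 l2 : mg t l1 l2 ->
  [/\ ~~ onl l1 t, ~~ onl l2 t & forall t', ~~ (onl l1 t' && onl l2 t')].
Proof.
case/mgP => i [Hi -> ->].
have cl : cidx t < k := rF_lt _.
have Ec : eF (cidx t) = (t.2 - t.1 * t.1)%R := rFK _.
have /and5P[a1 a2 a3 a4 a5] := pr_F1 cl Hi.
move: (cidx t) cl Ec a1 a2 a3 a4 a5 => c cl Ec a1 a2 a3 a4 a5.
case: t Ec => x y /= Ec.
split.
- apply/eqP => E; move/negP: a3; apply; apply/eqP; apply: eF_inj => //.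
  by rewrite Ec E; ring.
- apply/eqP => E; move/negP: a4; apply; apply/eqP; apply: eF_inj => //.
  by rewrite Ec E; ring.
- move=> [x' y'] /=; apply/negP => /andP[/eqP E1 /eqP E2].
  move/negP: a5; apply; apply/eqP; apply: eF_inj => //.
  by apply: (addrI (x * x')%R); rewrite -E1 -E2.
Qed.

Lemma mg2 t l1 l2 l3 : mg t l1 l2 -> mg t l1 l3 -> l2 = l3.
Proof.
case/mgP => i [Hi -> ->]; case/mgP => i' [Hi' [E] ->].
have cl : cidx t < k := rF_lt _.
have /and5P[a1 a2 _ _ _] := pr_F1 cl Hi.
have /and5P[b1 b2 _ _ _] := pr_F1 cl Hi'.
have := eF_inj a1 b1 E => E'.
have ii : i = i' by apply: (pr_F2 cl Hi Hi'); rewrite E' eqxx.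
by subst i'.
Qed.

Lemma mg3 t l1 l2 l3 : mg t l2 l1 -> mg t l1 l3 -> False.
Proof.
case/mgP => i [Hi _ ->]; case/mgP => i' [Hi' [E] _].
have cl : cidx t < k := rF_lt _.
have /and5P[a1 a2 _ _ a5] := pr_F1 cl Hi.
have /and5P[b1 b2 _ _ _] := pr_F1 cl Hi'.
have := eF_inj a2 b1 E => E'.
have ii : i = i' by apply: (pr_F2 cl Hi Hi'); rewrite E' eqxx !orbT.
by subst i'; rewrite E' eqxx in a5.
Qed.

Lemma mg4_aux (t t' : F * F) i i' : 0 < i <= h -> 0 < i' <= h -> t.1 = t'.1 ->
  ((pr (cidx t) i).1 == (pr (cidx t') i').1) && ((pr (cidx t) i).2 == (pr (cidx t') i').2) ||
  ((pr (cidx t) i).1 == (pr (cidx t') i').2) && ((pr (cidx t) i).2 == (pr (cidx t') i').1) ->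
  t = t'.
Proof.
move=> Hi Hi' E1 H.
have := pr_F3 (rF_lt _) (rF_lt _) Hi Hi' H.
case: t t' E1 {H} => x y [x' y'] /= -> E.
have : (y - x' * x' = y' - x' * x')%R by rewrite -[LHS]rFK -[RHS]rFK; rewrite /cidx /= in E; rewrite E.
by move/addIr => ->.
Qed.

Lemma mg4 t t' l1 l2 : mg t l1 l2 || mg t l2 l1 -> mg t' l1 l2 || mg t' l2 l1 -> t = t'.
Proof.
have cl : cidx t < k := rF_lt _.
have cl' : cidx t' < k := rF_lt _.
case/orP => /mgP [i [Hi E1 E2]]; case/orP => /mgP [i' [Hi' E1' E2']];
  move: E1' E2'; rewrite E1 E2 => -[e1 f1] [e2 f2];
  have /and5P[a1 a2 _ _ _] := pr_F1 cl Hi;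
  have /and5P[b1 b2 _ _ _] := pr_F1 cl' Hi';
  apply: (mg4_aux Hi Hi') => //.
- by rewrite (eF_inj a1 b1 f1) (eF_inj a2 b2 f2) !eqxx.
- by rewrite (eF_inj a1 b2 f2) (eF_inj a2 b1 f1) !eqxx orbT.
- by rewrite (eF_inj a1 b2 f2) (eF_inj a2 b1 f1) !eqxx orbT.
- by rewrite (eF_inj a1 b1 f1) (eF_inj a2 b2 f2) !eqxx.
Qed.

Lemma card_on_l l : #|[set t | onl l t]| = k.
Proof.
case: l => [[m|] c].
  have -> : [set t | onl (Some m, c) t] = [set (x, (m * x + c)%R) | x in [set: F]].
    apply/setP => -[x y]; rewrite !inE /=; apply/eqP/imsetP => [->|[x' _ [-> ->]]] //.
    by exists x.
  by rewrite card_imset ?cardsT // => x x' [].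
have -> : [set t | onl (None, c) t] = [set (c, y) | y in [set: F]].
  apply/setP => -[x y]; rewrite !inE /=; apply/eqP/imsetP => [->|[y' _ [-> _]]] //.
  by exists y.
by rewrite card_imset ?cardsT // => x x' [].
Qed.

Lemma card_off_l l : #|[set t | ~~ onl l t]| = k ^ 2 - k.
Proof.
have := cardsC [set t | onl l t]; rewrite card_on_l card_prod HF.
have -> : ~: [set t | onl l t] = [set t | ~~ onl l t] by apply/setP => t; rewrite !inE.
lia.
Qed.

Lemma card_on_t t : #|[set l | onl l t]| = k.+1.
Proof.
case: t => x y.
have -> : [set l | onl l (x, y)] =
   [set (match o with Some m => (Some m, y - m * x)%R | None => (None, x) end) | o in [set: option F]].
  apply/setP => -[[m|] c]; rewrite !inE /=; apply/eqP/imsetP.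
  - move=> E; exists (Some m); first by rewrite inE. rewrite /= E; congr (_, _); ring.
  - move=> [[m'|] _ //= [-> ->]]; ring.
  - by move=> ->; exists None; rewrite ?inE.
  - by move=> [[m'|] _ //= [->]].
rewrite card_imset ?cardsT ?card_option ?HF //.
by move=> [a|] [b|] //= []; move=> ->.
Qed.

Lemma card_off_t t : #|[set l | ~~ onl l t]| = k ^ 2 - 1.
Proof.
have := cardsC [set l | onl l t]; rewrite card_on_t card_prod card_option HF.
have -> : ~: [set l | onl l t] = [set l | ~~ onl l t] by apply/setP => l; rewrite !inE.
lia.
Qed.

Lemma card_sec t : h <= #|[set l | [exists l', mg t l' l]]|.
Proof.
pose s := [seq (Some t.1, eF (pr (cidx t) i).2) | i <- iota 1 h].
have cl : cidx t < k := rF_lt _.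
have us : uniq s.
  rewrite map_inj_in_uniq ?iota_uniq // => i i'; rewrite !mem_iota => Hi Hi' [E].
  have Hi1 : 0 < i <= h by lia.
  have Hi1' : 0 < i' <= h by lia.
  have /and5P[_ a2 _ _ _] := pr_F1 cl Hi1.
  have /and5P[_ b2 _ _ _] := pr_F1 cl Hi1'.
  by apply: (pr_F2 cl Hi1 Hi1'); rewrite (eF_inj a2 b2 E) eqxx !orbT.
have : #|s| = h by rewrite (card_uniqP us) size_map size_iota.
move=> <-; apply: subset_leq_card; apply/subsetP => l; rewrite inE => /mapP [i Hi ->].
apply/existsP; exists (Some t.1, eF (pr (cidx t) i).1).
by apply/hasP; exists i => //; rewrite !eqxx.
Qed.

End Geo.

Lemma upper (F : finFieldType) k h : #|F| = k -> 2 <= k -> (k = h.*2.+1 \/ k = h.*2.+2) ->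
  code_exists (k^2) (k^2 - k) (k^2).-1 (k^2 - h) (k^2 + k).
Proof.
move=> HF k2 Hk.
have kk : k <= k ^ 2 by rewrite expnS expn1 leq_pmull //; lia.
set q' := k^2 - h - 1.
have Hq : k^2 - h = q'.+1 by rewrite /q'; case: Hk => ->; lia.
pose mgf := mg (F:=F) k h.
have Hc : forall t, #|[set l | ~~ onl l t]| - #|[set l | [exists l', mgf t l' l]]| <= q'.
  move=> t; rewrite (card_off_t HF Hk) /mgf; have := card_sec HF Hk t; rewrite /q'; set s := #|_|; lia.
have H1 := mg1 HF Hk; have H2 := mg2 HF Hk; have H3 := mg3 HF Hk; have H4 := mg4 HF Hk.
rewrite Hq.
apply: (@code_of_labels _ _ (0,0)%R (k^2) q'.+1 (k^2+k) (k^2 - k) (lab (@onl F) mgf q')).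
- by rewrite card_prod HF mulnn.
- lia.
- by rewrite card_prod card_option HF mulSn mulnn addnC.
- move=> l; rewrite (eq_card (B := [set t | ~~ onl l t])) ?(card_off_l HF Hk) // => t.
  by rewrite !inE (lab0 H1 H3 Hc).
- move=> a b ab; exact: (lab_agree (@geo F) H1 H2 H3 H4 Hc ab).
Qed.

Lemma binE k : 2 <= k -> 'C(k ^ 2, 2) %/ 'C(k, 2) = k ^ 2 + k.
Proof.
move=> k2.
have Hb : forall n, 'C(n, 2) * 2 = n * n.-1.
  by move=> n; rewrite bin_ffact ffactnS ffactn1.
have h1 := Hb k; have h2 := Hb (k ^ 2).
have kk : 0 < k.-1 by lia.
have Hx : 0 < 'C(k, 2) by rewrite bin_gt0.
have -> : 'C(k ^ 2, 2) = 'C(k, 2) * (k ^ 2 + k).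
  apply/eqP; rewrite -(eqn_pmul2r (isT : 0 < 2)); apply/eqP.
  rewrite h2 mulnAC h1; rewrite !expnS expn0 !muln1.
  case: k k2 {h1 h2 kk Hx} => [|k] //= _; nia.
by rewrite mulKn.
Qed.

Lemma fin h q1 k : k = h.*2.+1 ->
  (2*k+1) * ((k^2+k) * k) + 3 * ((k^2+k) * (k^2-k)) <=
  (k^2+k) * (k^2+k).-1 + (k^2+k) * k^2 + k^2 * (k * k.+1) + 2 * k^2 * q1 ->
  q1.+1 < k^2 - (k-1) %/ 2 -> False.
Proof.
move=> -> H1 H2.
have E1 : (h.*2.+1 - 1) %/ 2 = h by lia.
rewrite E1 in H2.
have E2 : (h.*2.+1)^2 = 4*h*h + 4*h + 1 by rewrite !expnS expn0; lia.
rewrite E2 in H1 H2.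
have E3 : 4 * h * h + 4 * h + 1 - h.*2.+1 = 4*h*h + 2*h by lia.
have E4 : (4 * h * h + 4 * h + 1 + h.*2.+1).-1 = 4*h*h + 6*h + 1 by lia.
rewrite E3 E4 in H1.
have Hq : q1 <= 4*h*h + 3*h - 1 by lia.
have := leq_mul (leqnn (2 * (4*h*h+4*h+1))) Hq.
move: H1; rewrite -!mul2n.
nia.
Qed.
Lemma finE h q1 k : k = h.*2.+2 ->
  (2*k+1) * ((k^2+k) * k) + 3 * ((k^2+k) * (k^2-k)) <=
  (k^2+k) * (k^2+k).-1 + (k^2+k) * k^2 + k^2 * (k * k.+1) + 2 * k^2 * q1 ->
  q1.+1 < k^2 - (k-1) %/ 2 -> False.
Proof.
move=> -> H1 H2.
have E1 : (h.*2.+2 - 1) %/ 2 = h by lia.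
rewrite E1 in H2.
have E2 : (h.*2.+2)^2 = 4*h*h + 8*h + 4 by rewrite !expnS expn0; lia.
rewrite E2 in H1 H2.
have E3 : 4 * h * h + 8 * h + 4 - h.*2.+2 = 4*h*h + 6*h + 2 by lia.
have E4 : (4 * h * h + 8 * h + 4 + h.*2.+2).-1 = 4*h*h + 10*h + 5 by lia.
rewrite E3 E4 in H1.
have Hq : q1 <= 4*h*h + 7*h + 2 by lia.
have := leq_mul (leqnn (2 * (4*h*h+8*h+4))) Hq.
move: H1; rewrite -!mul2n.
nia.
Qed.

Theorem mainTheorem18 (k : nat) :
  2 <= k -> prime_power k ->
  is_q0'' 2 k (k ^ 2) (k ^ 2 - (k - 1) %/ 2).
Proof.
move=> k2 [p [e [pp [e0 ke]]]].
have [F _ HF] := pPrimePowerField pp e0.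
rewrite -ke in HF.
set h := (k - 1) %/ 2.
have Hk : k = h.*2.+1 \/ k = h.*2.+2 by rewrite /h; lia.
have kk : k <= k ^ 2 by rewrite expnS expn1 leq_pmull //; lia.
have Ed : k ^ 2 - 2 + 1 = (k ^ 2).-1 by lia.
rewrite /is_q0'' /= binE // Ed; split; first exact: (upper HF k2 Hk).
move=> q Hq [C [HC Hcode]].
case: q Hq C HC Hcode => [|q1] Hq C HC Hcode.
  have : 0 < #|C| by rewrite HC; lia.
  case/card_gt0P => x _.
  have i : 'I_(k ^ 2) by apply: (@Ordinal _ 0); lia.
  by case: (x i).
have := lower_ineq k HC Hcode.
have -> : k ^ 2 - (k ^ 2 - k) = k by lia.
move=> H; case: Hk => Ek; [exact: (fin Ek H Hq) | exact: (finE Ek H Hq)].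
Qed.
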